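(* Let $f:\mathbb{R}^n\to\mathbb{R}$ have $L$-Lipschitz continuous gradient ($L>0$), i.e. $\|\nabla f(x)-\nabla f(y)\|\le L\|x-y\|$ for all $x,y$, and satisfy the Polyak–Łojasiewicz condition with constant $\mu>0$: $f(x)-f^*\le \frac{1}{2\mu}\|\nabla f(x)\|^2$ for all $x\in\mathbb{R}^n$, where $f^*=f(x_* )$ for a minimizer $x_*$ of $f$. Let $\Delta>0$ and suppose that at every point $x$ an inexact gradient $\widetilde{\nabla}f(x)$ is available with $\nabla f(x)=\widetilde{\nabla}f(x)+v(x)$, $\|v(x)\|\le\Delta$. Consider the gradient method $x_{k+1}=x_k-\frac{1}{L}\widetilde{\nabla}f(x_k)$ started from $x_0$, and suppose the stopping criterion $\|\widetilde{\nabla}f(x_k)\|\le\sqrt{6}\,\Delta$ is satisfied for the first time at iteration $k=N$. Then the output point $\widehat{x}=x_N$ satisfies $$f(\widehat{x})-f^*\le\frac{7\Delta^2}{\mu},$$ and the number of iterations satisfies $$N<\frac{2L}{\Delta^2}\bigl(f(x_0)-f^*\bigr).$$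
   Context: $\|\cdot\|$ is the Euclidean norm. ''Satisfied for the first time at iteration $N$'' means $\|\widetilde{\nabla}f(x_k)\|>\sqrt6\Delta$ for all $k=0,\dots,N-1$ and $\|\widetilde{\nabla}f(x_N)\|\le\sqrt6\Delta$. *)

(* Defs.v *)
From HB Require Import structures.
From mathcomp Require Import all_boot all_order all_algebra.
From mathcomp Require Import all_classical all_reals all_analysis.
Set Implicit Arguments. Unset Strict Implicit. Unset Printing Implicit Defensive.
Import Order.TTheory GRing.Theory Num.Theory.
Import numFieldNormedType.Exports.
Local Open Scope ring_scope.

(* Euclidean inner product and Euclidean norm on R^n (the library norm on
   matrices is the sup norm, so we define the Euclidean one explicitly). *)
Definition dotv {R : realType} {n : nat} (u v : 'rV[R]_n) : R :=
  \sum_(i < n) u ord0 i * v ord0 i.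

Definition enorm {R : realType} {n : nat} (v : 'rV[R]_n) : R :=
  Num.sqrt (dotv v v).

Definition is_gradient {R : realType} {n : nat}
  (f : 'rV[R]_n -> R) (g : 'rV[R]_n -> 'rV[R]_n) : Prop :=
  forall x, differentiable f x /\ forall h, 'd f x h = dotv (g x) h.

(* Main.v *)
Require Import Defs.
From HB Require Import structures.
From mathcomp Require Import all_boot all_order all_algebra.
From mathcomp Require Import all_classical all_reals all_analysis.
From mathcomp Require Import lra ring.
Import Order.TTheory GRing.Theory Num.Theory.
Import numFieldNormedType.Exports.
Local Open Scope ring_scope.

Section S.
Context {R : realType} {n : nat}.
Implicit Types u v w : 'rV[R]_n.

Lemma dotvC u v : dotv u v = dotv v u.
Proof. by apply: eq_bigr => i _; rewrite mulrC. Qed.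
Lemma dotvDl u v w : dotv (u + v) w = dotv u w + dotv v w.
Proof. by rewrite /dotv -big_split; apply: eq_bigr => i _; rewrite mxE mulrDl. Qed.
Lemma dotvNl u w : dotv (- u) w = - dotv u w.
Proof. by rewrite /dotv -sumrN; apply: eq_bigr => i _; rewrite mxE mulNr. Qed.
Lemma dotvZl (a : R) u w : dotv (a *: u) w = a * dotv u w.
Proof. by rewrite /dotv mulr_sumr; apply: eq_bigr => i _; rewrite mxE mulrA. Qed.
Lemma dotv_ge0 u : 0 <= dotv u u.
Proof. by apply: sumr_ge0 => i _; rewrite -expr2 sqr_ge0. Qed.
Lemma enorm_sqr u : enorm u ^+ 2 = dotv u u.
Proof. by rewrite /enorm sqr_sqrtr // dotv_ge0. Qed.
Lemma enorm_ge0 u : 0 <= enorm u.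
Proof. exact: sqrtr_ge0. Qed.
Lemma dotvBl u v w : dotv (u - v) w = dotv u w - dotv v w.
Proof. by rewrite dotvDl dotvNl. Qed.
Lemma dotvDr u v w : dotv w (u + v) = dotv w u + dotv w v.
Proof. by rewrite dotvC dotvDl !(dotvC w). Qed.
Lemma dotvZr (a : R) u w : dotv w (a *: u) = a * dotv w u.
Proof. by rewrite dotvC dotvZl dotvC. Qed.
Lemma dotvNr u w : dotv w (- u) = - dotv w u.
Proof. by rewrite dotvC dotvNl dotvC. Qed.
Lemma dotvBr u v w : dotv w (u - v) = dotv w u - dotv w v.
Proof. by rewrite dotvDr dotvNr. Qed.

Lemma line_derive (f : 'rV[R]_n -> R) gradf (y d : 'rV[R]_n) (t : R) :
  is_gradient f gradf ->
  is_derive t 1 (fun s : R => f (s *: d + y)) (dotv (gradf (t *: d + y)) d).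
Proof.
move=> hg; have [df dfE] := hg (t *: d + y).
have dv := @diff_derivable _ _ _ _ _ d df.
have E : (fun h : R => h^-1 *: (((fun s : R => f (s *: d + y)) \o shift t) (h *: 1) - f (t *: d + y)))
  = (fun h : R => h^-1 *: ((f \o shift (t *: d + y)) (h *: d) - f (t *: d + y))).
  apply/funext => h /=; rewrite /shift /= [h *: 1]mulr1 scalerDl addrA //.
split.
  by rewrite /derivable E.
by rewrite /derive E -/(derive f _ d) deriveE // dfE.
Qed.
End S.

Section D.
Local Open Scope classical_set_scope.
Lemma descent' (R : realType) n (f : 'rV[R]_n -> R) gradf (L : R) (y d : 'rV[R]_n) :
  is_gradient f gradf -> 0 < L ->
  (forall y z, enorm (gradf y - gradf z) <= L * enorm (y - z)) ->
  f (d + y) <= f y + dotv (gradf y) d + L / 2 * dotv d d.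
Proof.
move=> hg hL lip.
set c0 := dotv (gradf y) d; set D := dotv d d; set k := L / 2 * D.
pose g := fun s : R => f (s *: d + y).
pose psi : R -> R := (g - c0 \*: (@id R) - k \*: ((@id R) * (@id R)))%R.
have dpsi : forall t : R, is_derive t (1:R) psi (dotv (gradf (t *: d + y)) d - c0 - L * D * t).
  move=> t; apply: is_derive_eq.
    apply: is_deriveB; first apply: is_deriveB.
    exact: line_derive.
  have sc : forall a b : R, a *: b = a * b by [].
  rewrite !sc !mulr1 /k /=; lra.
have cont : {within `[0, 1], continuous psi}.
  apply: derivable_within_continuous => t _.
  by case: (dpsi t).
have [c c01 E] := MVT_segment ler01 (fun t _ => dpsi t) cont.
have psiE : forall s, psi s = f (s *: d + y) - c0 * s - k * (s * s) by [].
move: E; rewrite !psiE scale1r scale0r add0r !mulr0 !mulr1 !subr0.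
have key : dotv (gradf (c *: d + y)) d - c0 <= L * D * c.
  have c0le : 0 <= c by move: c01; rewrite in_itv /= => /andP[].
  case: (ltgtP c 0) c0le => // [cpos|->] _; last first.
    by rewrite scale0r add0r /c0 subrr mulr0.
  set u := gradf (c *: d + y) - gradf y.
  have hu : dotv u d = dotv (gradf (c *: d + y)) d - c0 by rewrite /u dotvBl.
  rewrite -hu.
  have l1 := lip (c *: d + y) y; rewrite -/u addrK in l1.
  clearbody u.
  have e2 : enorm (c *: d) ^+ 2 = c ^+ 2 * D by rewrite enorm_sqr dotvZl dotvZr mulrA -expr2.
  have u2 : enorm u ^+ 2 = dotv u u by rewrite enorm_sqr.
  have p := dotv_ge0 (u - (L * c) *: d).
  rewrite !(dotvBl, dotvBr, dotvZl, dotvZr) (dotvC d u) -/D in p.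
  have g1 := enorm_ge0 u; have g2 := enorm_ge0 (c *: d).
  have hD := dotv_ge0 d; rewrite -/D in hD.
  have uu : dotv u u <= L ^+ 2 * (c ^+ 2 * D).
    rewrite -u2 -e2 -exprMn; apply: lerXn2r; rewrite ?nnegrE //.
    by rewrite mulr_ge0 // ltW.
  have Lc : 0 < L * c by rewrite mulr_gt0.
  nra.
rewrite /k; nra.
Qed.
End D.

Theorem theorem2 (R : realType) (n : nat)
  (f : 'rV[R]_n -> R) (gradf : 'rV[R]_n -> 'rV[R]_n)
  (L mu Delta : R) (xstar : 'rV[R]_n)
  (gt : 'rV[R]_n -> 'rV[R]_n) (x : nat -> 'rV[R]_n) (N : nat) :
  is_gradient f gradf ->
  0 < L ->
  (forall y z, enorm (gradf y - gradf z) <= L * enorm (y - z)) ->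
  (forall y, f xstar <= f y) ->
  0 < mu ->
  (forall y, f y - f xstar <= (2 * mu)^-1 * enorm (gradf y) ^+ 2) ->
  0 < Delta ->
  (forall y, enorm (gradf y - gt y) <= Delta) ->
  (forall k, x k.+1 = x k - L^-1 *: gt (x k)) ->
  (forall k, (k < N)%N -> Num.sqrt 6 * Delta < enorm (gt (x k))) ->
  enorm (gt (x N)) <= Num.sqrt 6 * Delta ->
  f (x N) - f xstar <= 7 * Delta ^+ 2 / mu /\
  (N%:R < 2 * L / Delta ^+ 2 * (f (x 0%N) - f xstar)
   \/ (N = 0%N /\ f (x 0%N) = f xstar)).
Proof.
move=> hg hL lip hmin hmu pl hD hv hx hbig hstop.
have s6 : Num.sqrt 6 ^+ 2 = 6 :> R by rewrite sqr_sqrtr.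
have s6p : 0 <= Num.sqrt 6 :> R by exact: sqrtr_ge0.
have facts : forall z, let G := gt z in let V := gradf z - gt z in
    [/\ dotv V V <= Delta ^+ 2, gradf z = G + V,
        0 <= dotv G G - 2 * dotv G V + dotv V V,
        0 <= dotv G G + 4 * dotv G V + 4 * dotv V V &
        dotv (gradf z) (gradf z) = dotv G G + 2 * dotv G V + dotv V V].
  move=> z G V.
  have eV : gradf z = G + V by rewrite /V /G addrC subrK.
  have cVV : dotv V V <= Delta ^+ 2.
    rewrite -enorm_sqr; apply: lerXn2r; rewrite ?nnegrE ?enorm_ge0 ?(ltW hD) //; exact: hv.
  clearbody G V.
  have p1 := dotv_ge0 (G - V).
  have p2 := dotv_ge0 (G + 2%:R *: V).
  rewrite !(dotvBl, dotvBr, dotvDl, dotvDr, dotvZl, dotvZr) (dotvC V G) in p1 p2.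
  split => //.
  - lra.
  - lra.
  - rewrite eV !(dotvDl, dotvDr) (dotvC V G); lra.
split.
  have [cVV eV p1 p2 eN] := facts (x N).
  have aN : dotv (gt (x N)) (gt (x N)) <= 6 * Delta ^+ 2.
    rewrite -enorm_sqr -s6 -exprMn; apply: lerXn2r; rewrite ?nnegrE ?enorm_ge0 //.
    by rewrite mulr_ge0 // ltW.
  apply: (le_trans (pl (x N))); rewrite enorm_sqr eN.
  have -> : 7 * Delta ^+ 2 / mu = (2 * mu)^-1 * (14 * Delta ^+ 2).
    by field; rewrite gt_eqF.
  apply: ler_wpM2l; first by rewrite invr_ge0 mulr_ge0 // ltW.
  lra.
set li := L^-1.
have Lli : L * li = 1 by rewrite /li mulfV // gt_eqF.
have lip0 : 0 < li by rewrite /li invr_gt0.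
have step : forall k, (k < N)%N -> f (x k.+1) < f (x k) - li * Delta ^+ 2 / 2.
  move=> k kN; have [cVV eV p1 p2 eN] := facts (x k).
  have aN : 6 * Delta ^+ 2 < dotv (gt (x k)) (gt (x k)).
    rewrite -enorm_sqr -s6 -exprMn; apply: ltrXn2r; rewrite ?nnegrE ?enorm_ge0 //.
      by rewrite mulr_ge0 // ltW.
    exact: hbig.
  have ds := @descent' _ _ f gradf L (x k) (- (li *: gt (x k))) hg hL lip.
  rewrite addrC -/li -hx in ds.
  apply: (le_lt_trans ds).
  rewrite eV !(dotvDl, dotvNr, dotvNl, dotvZr, dotvZl) (dotvC _ (gt (x k))).
  set a := dotv (gt (x k)) (gt (x k)) in aN p1 p2 *.
  set b := dotv (gt (x k)) (gradf (x k) - gt (x k)) in p1 p2 *.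
  set c := dotv (gradf (x k) - gt (x k)) (gradf (x k) - gt (x k)) in cVV p1 p2 *.
  have hb : dotv (gt (x k)) (gradf (x k)) = a + b by rewrite /b dotvBr /a; ring.
  have hq : L / 2 * (li * (li * a)) = li * a / 2.
    by transitivity ((L * li) * (li * a) / 2); [ring | rewrite Lli mul1r].
  rewrite hb !opprK hq.
  nra.
set q := li * Delta ^+ 2 / 2.
have q0 : 0 < q by rewrite /q mulr_gt0 // mulr_gt0 // exprn_gt0.
have tel : forall k, (k <= N)%N -> f (x k) + k%:R * q <= f (x 0%N).
  elim => [|k IH] kN; first by rewrite mul0r addr0.
  have h1 := step k kN; have h2 := IH (ltnW kN).
  rewrite -/q in h1; rewrite -natr1; lra.
set w := 2 * L / Delta ^+ 2.
have w0 : 0 < w by rewrite /w divr_gt0 ?mulr_gt0 ?exprn_gt0.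
have wq : w * q = 1.
  rewrite /w /q; transitivity ((L * li) * (Delta ^+ 2 / Delta ^+ 2) * (2 / 2)); first ring.
  rewrite Lli mul1r !divff ?mulr1 //; by rewrite expf_neq0 // gt_eqF.
have h0 := hmin (x 0%N).
case: N hbig hstop step tel => [|M] hbig hstop step tel.
  case: (eqVneq (f (x 0%N)) (f xstar)) => [e|ne]; first by right.
  left; rewrite mulr_gt0 // subr_gt0 lt_neqAle eq_sym ne h0 //.
left.
have h1 := step M (ltnSn M); have h2 := tel M (ltnW (ltnSn M)); have h3 := hmin (x M.+1).
have hX : M.+1%:R * q < f (x 0%N) - f xstar by rewrite -/q in h1; rewrite -natr1; lra.
have : 0 < w * (f (x 0%N) - f xstar - M.+1%:R * q) by rewrite mulr_gt0 // subr_gt0.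
rewrite mulrBr mulrCA wq mulr1 subr_gt0 //.
Qed.
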